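(* Let $U$ be a finite set, $\mathcal{F}$ a multiset (family) of subsets of $U$, and $s,d,t$ nonnegative integers. For $N\subseteq U$ let $\mathcal{F}_N$ be the subfamily of all members of $\mathcal{F}$ equal to $N$ (with multiplicity). Let \[\mathcal{C} = \Big\{\{N_1,\dots,N_b\} : b\le t,\ N_i\subseteq U \ (i\in[b]),\ \textstyle\bigcup_{i=1}^b N_i = U\Big\},\] and for $N\subseteq U$ let $\mathcal{C}_N=\{c\in\mathcal{C}: N\in c\}$. Let $\mathcal{L}$ be the integer linear system in integer variables $x=(x_c: c\in\mathcal{C})$ and $z=(z_N: N\subseteq U)$: \begin{align*} &\textstyle\sum_{c\in\mathcal{C}} x_c\ge d, \qquad \sum_{N\subseteq U} z_N\le s,\\ &\textstyle\sum_{c\in\mathcal{C}_N} x_c \le |\mathcal{F}_N| - z_N \quad\text{for every } N\subseteq U,\\ &0\le z_N\le |\mathcal{F}_N| \quad \text{for every } N\subseteq U,\qquad 0\le x_c\le d\quad\text{for every } c\in\mathcal{C}. \end{align*} Say $\mathcal{L}$ is $z$-resilient if for every integral assignment of $z$ satisfying $\sum_{N\subseteq U} z_N\le s$ and $0\le z_N\le|\mathcal{F}_N|$ for all $N\subseteq U$, there is an integral assignment of $x$ such that all inequalities of $\mathcal{L}$ hold. Then $(U,\mathcal{F},s,d,t)$ is a positive instance of the \textsc{Resiliency Disjoint Set Cover Problem} if and only if $\mathcal{L}$ is $z$-resilient.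
   Context: \textsc{Resiliency Disjoint Set Cover Problem} (RDSCP): given a universe $U$, a multiset $\mathcal{F}$ of subsets of $U$ and integers $s,d,t$, decide whether for every subfamily $\mathcal{S}\subseteq\mathcal{F}$ with $|\mathcal{S}|\le s$ there exist $\mathcal{T}_1,\dots,\mathcal{T}_d\subseteq \mathcal{F}\setminus\mathcal{S}$ such that for all $i,j\in[d]$: $|\mathcal{T}_i|\le t$, $\bigcup_{X\in\mathcal{T}_i}X = U$, and $\mathcal{T}_i\cap\mathcal{T}_j=\emptyset$ for $j\ne i$. Operations on multisets (subfamily, difference, intersection) respect multiplicities. $[p]=\{1,\dots,p\}$. *)

(* Defs.v *)
From mathcomp Require Import all_boot all_order all_algebra.
Set Implicit Arguments. Unset Strict Implicit. Unset Printing Implicit Defensive.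
Import Order.TTheory GRing.Theory Num.Theory.

(* The family F is a sequence of subsets of U; its members are identified by
   their positions 'I_(size F), so that multiplicities are respected:
   a subfamily is a set of positions. *)

Definition member (U : finType) (F : seq {set U}) (k : 'I_(size F)) : {set U} :=
  nth set0 F k.

Definition rdscp (U : finType) (F : seq {set U}) (s d t : nat) : Prop :=
  forall S : {set 'I_(size F)}, #|S| <= s ->
  exists T : 'I_d -> {set 'I_(size F)},
    (forall i, [disjoint T i & S]) /\
    (forall i, #|T i| <= t) /\
    (forall i, \bigcup_(k in T i) member k = [set: U]) /\
    (forall i j, i != j -> [disjoint T i & T j]).

Definition multF (U : finType) (F : seq {set U}) (N : {set U}) : nat :=
  count_mem N F.

Definition inC (U : finType) (t : nat) (c : {set {set U}}) : bool :=
  (#|c| <= t) && (\bigcup_(N in c) N == [set: U]).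

Local Open Scope ring_scope.

Definition z_resilient (U : finType) (F : seq {set U}) (s d t : nat) : Prop :=
  forall z : {set U} -> int,
    \sum_(N : {set U}) z N <= s%:Z ->
    (forall N, 0 <= z N <= (multF F N)%:Z) ->
    exists x : {set {set U}} -> int,
      [/\ \sum_(c | inC t c) x c >= d%:Z,
          \sum_(N : {set U}) z N <= s%:Z,
          (forall N : {set U},
              \sum_(c | inC t c && (N \in c)) x c <= (multF F N)%:Z - z N),
          (forall N, 0 <= z N <= (multF F N)%:Z) &
          (forall c, inC t c -> 0 <= x c <= d%:Z)].

(* Main.v *)
Require Import Defs.
From mathcomp Require Import all_boot all_order all_algebra zify.
Set Implicit Arguments. Unset Strict Implicit. Unset Printing Implicit Defensive.
Import Order.TTheory GRing.Theory Num.Theory.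

Lemma fiber_sum (I J : finType) (f : I -> J) (A : pred I) (P : pred J) :
  \sum_(j | P j) #|[set i | A i && (f i == j)]| = #|[set i | A i && P (f i)]|.
Proof.
rewrite -sum1dep_card (partition_big f P) /=; last by move=> i /andP[].
apply: eq_bigr => j Pj; rewrite -sum1dep_card; apply: eq_bigl => i.
by case: (f i =P j) => [->|]; rewrite ?Pj ?andbT ?andbF.
Qed.

Lemma sumz (I : finType) (P : pred I) (g : I -> nat) :
  (\sum_(i | P i) Posz (g i) = Posz (\sum_(i | P i) g i))%R.
Proof. by rewrite (big_morph Posz PoszD (erefl (Posz 0))). Qed.

Lemma card_memb (U : finType) (F : seq {set U}) N :
  #|[set k : 'I_(size F) | member k == N]| = multF F N.
Proof.
rewrite -sum1dep_card /multF -sum1_count (big_nth set0) big_mkord.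
by apply: eq_bigl => k.
Qed.

Lemma card_split (U : finType) (F : seq {set U}) N (S : {set 'I_(size F)}) :
  #|[set k | (member k == N) && (k \notin S)]| + #|[set k | (k \in S) && (member k == N)]|
  = multF F N.
Proof.
rewrite -card_memb -(cardsID S [set k | member k == N]) addnC; congr (_ + _);
  apply: eq_card => k; rewrite !inE //; by rewrite andbC.
Qed.

Lemma count_take_card (T : Type) (x0 : T) (s : seq T) (P : pred T) d :
  d <= size s -> #|[set j : 'I_d | P (nth x0 s j)]| <= count P s.
Proof.
move=> ds.
have -> : #|[set j : 'I_d | P (nth x0 s j)]| = count P (take d s).
  rewrite -sum1_count (big_nth x0) size_takel // big_mkord sum1dep_card.
  by apply: eq_card => j; rewrite !inE nth_take.
by rewrite -{2}(cat_take_drop d s) count_cat leq_addr.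
Qed.
Lemma dir1 (U : finType) (F : seq {set U}) (s d t : nat) :
  rdscp F s d t -> z_resilient F s d t.
Proof.
move=> H z zs zb.
pose zn N := `|z N|%N.
have zE N : z N = Posz (zn N).
  by rewrite /zn; case: (z N) (zb N).
have znle N : zn N <= multF F N.
  by have /andP[_] := zb N; rewrite zE lez_nat.
pose A N := [set k : 'I_(size F) | member k == N].
pose B N := [set k in take (zn N) (enum (A N))].
have BA N k : k \in B N -> member k == N.
  by rewrite inE => /mem_take; rewrite mem_enum inE.
have cardB N : #|B N| = zn N.
  rewrite cardsE (card_uniqP (take_uniq _ (enum_uniq _))).
  by rewrite size_takel // -cardE card_memb.
pose S := [set k | k \in B (member k)].
have SB N : [set k | (k \in S) && (member k == N)] = B N.
  apply/setP => k; rewrite !inE; apply/andP/idP => [[kS /eqP <-] //|kB].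
  have kB' : k \in B N by rewrite inE.
  by have /eqP e := BA _ _ kB'; rewrite e; split.
have Ss : #|S| <= s.
  have := fiber_sum (fun k : 'I_(size F) => member k) (mem S) predT.
  under eq_bigr do rewrite SB.
  have -> : #|[set i | (i \in S) && predT (member i)]| = #|S|.
    by apply: eq_card => k; rewrite !inE andbT.
  move=> <-; under eq_bigr do rewrite cardB.
  move: zs; rewrite -lez_nat -sumz.
  by move=> h; apply: le_trans h; rewrite le_eqVlt; apply/orP; left; apply/eqP; apply: eq_bigr => N _; rewrite zE.
have [T [TS [Tt [Tc Td]]]] := H S Ss.
pose f i := (@member U F) @: T i.
have fC i : inC t (f i).
  apply/andP; split; first exact: leq_trans (leq_imset_card _ _) (Tt i).
  apply/eqP; rewrite -(Tc i); apply/setP => u; apply/bigcupP/bigcupP.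
    by move=> [_ /imsetP[k kT ->] uk]; exists k.
  by move=> [k kT uk]; exists (member k) => //; apply: imset_f.
pose xn c := #|[set i : 'I_d | true && (f i == c)]|.
exists (fun c => Posz (xn c)); split => //.
- rewrite sumz lez_nat /xn fiber_sum.
  by rewrite -[X in X <= _]card_ord; apply: subset_leq_card; apply/subsetP => i; rewrite inE fC.
- move=> N; rewrite sumz /xn fiber_sum zE.
  set I := [set i | _].
  have cI : #|I| <= #|[set k | (member k == N) && (k \notin S)]|.
    pose h i := [pick k in T i | member k == N].
    rewrite -(card_in_imset (f := h)); last first.
      move=> i j; rewrite !inE /= => /andP[_ /imsetP[k kT ek]] /andP[_ /imsetP[k' kT' ek']].
      rewrite /h; case: pickP => [a /andP[aTi /eqP ea]|]; last by move/(_ k); rewrite kT ek eqxx.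
      case: pickP => [b /andP[bTj /eqP eb]|]; last by move/(_ k'); rewrite kT' ek' eqxx.
      case=> eab; subst b; apply/eqP; apply: contraT => ij.
      by rewrite (disjointFr (Td _ _ ij) aTi) in bTj.
    apply: (@leq_trans #|Some @: [set k | (member k == N) && (k \notin S)]|); last by rewrite card_imset //; exact: Some_inj.
    apply: subset_leq_card; apply/subsetP => o /imsetP[i]; rewrite inE /= => /andP[_ /imsetP[k kT ek]] ->.
    rewrite /h; case: pickP => [a /andP[aTi /eqP ea]|]; last by move/(_ k); rewrite kT ek eqxx.
    apply: imset_f; rewrite inE ea eqxx /=.
    by rewrite (disjointFr (TS i) aTi).
  have := card_split N S; rewrite SB cardB => e.
  by move: cI; rewrite -e PoszD addrK lez_nat.
- by move=> c _; rewrite lez_nat /= -[X in _ <= X]card_ord max_card.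
Qed.
Lemma dir2 (U : finType) (F : seq {set U}) (s d t : nat) :
  z_resilient F s d t -> rdscp F s d t.
Proof.
move=> H S Ss.
pose zn N := #|[set k | (k \in S) && (member k == N)]|.
have h1 : (\sum_N Posz (zn N) <= s%:Z)%R.
  rewrite sumz lez_nat /zn.
  have := fiber_sum (fun k : 'I_(size F) => member k) (mem S) predT.
  have -> : #|[set i | (i \in S) && predT (member i)]| = #|S|.
    by apply: eq_card => k; rewrite !inE andbT.
  by move=> e; rewrite -e in Ss; exact: Ss.
have h2 : forall N, (0 <= Posz (zn N) <= (multF F N)%:Z)%R.
  move=> N; rewrite lez_nat /= -(card_split N S); exact: leq_addl.
have [x [xd _ xN _ xb]] := H (fun N => Posz (zn N)) h1 h2.
pose xn c := `|x c|%N.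
have xE c : inC t c -> x c = Posz (xn c).
  by move=> /xb; rewrite /xn; case: (x c).
pose cs := flatten [seq nseq (xn c) c | c <- enum [pred c | inC t c]].
have countcs (P : pred {set {set U}}) : count P cs = \sum_(c | inC t c) P c * xn c.
  rewrite count_flatten sumnE !big_map big_enum /=.
  by apply: eq_bigr => c _; rewrite count_nseq mulnC.
have sizecs : d <= size cs.
  rewrite -count_predT countcs -lez_nat -sumz.
  apply: (le_trans xd); rewrite le_eqVlt; apply/orP; left; apply/eqP.
  by apply: eq_bigr => c cC; rewrite mul1n xE.
have csC c : c \in cs -> inC t c.
  by move=> /flatten_mapP[c' ]; rewrite mem_enum inE => c'C; rewrite mem_nseq => /andP[_ /eqP ->].
pose cover (i : 'I_d) := nth set0 cs i.
have coverC i : inC t (cover i).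
  by apply: csC; apply: mem_nth; exact: leq_trans (ltn_ord i) sizecs.
pose avS N := [set k | (member k == N) && (k \notin S)].
pose av N := enum (avS N).
have Cnt N : #|[set j : 'I_d | N \in cover j]| <= size (av N).
  apply: leq_trans (count_take_card set0 (fun c => N \in c) sizecs) _.
  rewrite countcs /av -cardE.
  have := xN N; rewrite -lez_nat.
  have := card_split N S; rewrite -/(zn N) => e.
  have -> : \sum_(c | inC t c) (N \in c) * xn c = \sum_(c | inC t c && (N \in c)) xn c.
    by rewrite [RHS]big_mkcondr /=; apply: eq_bigr => c _; case: (N \in c); rewrite ?mul1n ?mul0n.
  rewrite -e -sumz PoszD addrK.
  move=> h; apply: le_trans h; rewrite le_eqVlt; apply/orP; left; apply/eqP.
  by apply: eq_bigr => c /andP[cC _]; rewrite xE.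
pose r (i : 'I_d) N := #|[set j : 'I_d | (j < i) && (N \in cover j)]|.
have rlt (i : 'I_d) N : N \in cover i -> r i N < size (av N).
  move=> Ni; apply: leq_trans (Cnt N); apply: proper_card; apply/properP; split.
    by apply/subsetP => j; rewrite !inE => /andP[].
  by exists i; rewrite !inE ?Ni // ltnn.
have rmono (i j : 'I_d) N : i < j -> N \in cover i -> r i N < r j N.
  move=> ij Ni; apply: proper_card; apply/properP; split.
    apply/subsetP => k; rewrite !inE => /andP[ki ->]; rewrite andbT.
    exact: ltn_trans ki ij.
  by exists i; rewrite !inE ?Ni ?ij // ltnn.
have rinj (i j : 'I_d) N : N \in cover i -> N \in cover j -> r i N = r j N -> i = j.
  move=> Ni Nj e; apply/eqP; apply: contraT; rewrite neq_ltn => /orP[] ij.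
    by have := rmono _ _ _ ij Ni; rewrite e ltnn.
  by have := rmono _ _ _ ij Nj; rewrite e ltnn.
have avP N k : (k \in av N) = (member k == N) && (k \notin S).
  by rewrite mem_enum inE.
have ex (i : 'I_d) N : N \in cover i -> exists k, [/\ k \in av N & index k (av N) = r i N].
  move=> Ni; have := rlt i N Ni.
  have uq : uniq (av N) by apply: enum_uniq.
  move: uq; case: (av N) => [//|k0 a'] uq lt.
  exists (nth k0 (k0 :: a') (r i N)); split; first exact: mem_nth.
  exact: index_uniq.
pose T i := [set k | (k \notin S) && (member k \in cover i) && (index k (av (member k)) == r i (member k))].
exists T; split; [|split; [|split]].
- move=> i; apply/pred0P => k /=; rewrite !inE.
  by case: (k \in S); rewrite ?andbF.
- move=> i; rewrite -(card_in_imset (f := (@member U F))); last first.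
    move=> k k'; rewrite !inE => /andP[/andP[kS kc] /eqP ki] /andP[/andP[k'S k'c] /eqP k'i] e.
    rewrite -e in k'i.
    have kin : k \in av (member k) by rewrite avP eqxx kS.
    have k'in : k' \in av (member k) by rewrite avP e eqxx k'S.
    by apply: index_inj (etrans ki (esym k'i)).
  apply: leq_trans (_ : #|cover i| <= t); last by case/andP: (coverC i).
  apply: subset_leq_card; apply/subsetP => o /imsetP[k]; rewrite inE => /andP[/andP[_ kc] _] ->.
  exact: kc.
- move=> i; apply/setP => u; rewrite inE; apply/bigcupP.
  have /andP[_ /eqP cv] := coverC i.
  have : u \in \bigcup_(N in cover i) N by rewrite cv inE.
  move=> /bigcupP[N Ni uN].
  have [k [kav kidx]] := ex i N Ni.
  move: (kav); rewrite avP => /andP[/eqP km kS].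
  exists k => //; last by rewrite km.
  by rewrite inE kS km Ni kidx eqxx.
- move=> i j ij; apply/pred0P => k /=; rewrite !inE.
  apply/negP => /andP[/andP[/andP[_ ki] /eqP ei] /andP[/andP[_ kj] /eqP ej]].
  by move/negP: ij; apply; apply/eqP; apply: rinj ki kj _; rewrite -ei -ej.
Qed.

Theorem lemma1 (U : finType) (F : seq {set U}) (s d t : nat) :
  rdscp F s d t <-> z_resilient F s d t.
Proof. split; [exact: dir1 | exact: dir2]. Qed.
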